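(* Let $T$ be a $3$-CET with exactly one flip, with domain $S^1\setminus\{a_0,a_1,a_2\}$ where $0=a_0<a_1<a_2<a_3=1$ and $I_i=(a_{i-1},a_i)$, $i=1,2,3$, such that $I_1$ is the flip of $T$ and $T(I_1)<T(I_3)<T(I_2)$ in the cyclic order. Assume that $T$ has no periodic points. Then there exists $N\ge 2$ such that $T^n(I_1)\cap I_1=\emptyset$ for all $1\le n\le N-1$ and $T^N(I_1)\cap I_1\neq\emptyset$. Furthermore, the sets $T^n(I_1)$, $0\le n\le N-1$, are pairwise disjoint.
   Context: $S^1=[0,1]/(0\sim1)$ with orientation induced by $[0,1]$ and points written as points of $[0,1]$. A $3$-CET is an injective map $T:I_1\cup I_2\cup I_3\to S^1$, where $I_1,I_2,I_3$ are pairwise disjoint open subintervals whose closures cover $S^1$, which is an isometry on each $I_i$ and cannot be continuously extended to a larger open set. A flip is an $I_i$ on which $T$ reverses orientation. For a set $J$, $T^n(J)=\{T^n(x): x\in J\cap \mathrm{Dom}(T^n)\}$. For subintervals $J_1,J_2,J_3$ of $S^1$, $J_1<J_2<J_3$ means every triple $(x_1,x_2,x_3)\in J_1\times J_2\times J_3$ is cyclically ordered. A periodic point is $p$ with $T^m(p)=p$ for some $m\ge1$. *)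

(* Defs.v *)
(* concrete reals R.  S^1 = [0,1)/(0~1); points are reals in [0,1). *)
From Stdlib Require Import Reals.
Open Scope R_scope.

Definition md1 (x : R) : R := frac_part x.

Definition cdist (x y : R) : R := Rmin (md1 (x - y)) (1 - md1 (x - y)).

Definition cyc (x y z : R) : Prop :=
  (x < y < z) \/ (y < z < x) \/ (z < x < y).

Definition I1 (a1 a2 : R) (x : R) : Prop := 0 < x < a1.
Definition I2 (a1 a2 : R) (x : R) : Prop := a1 < x < a2.
Definition I3 (a1 a2 : R) (x : R) : Prop := a2 < x < 1.

Definition Dom (a1 a2 : R) (x : R) : Prop := I1 a1 a2 x \/ I2 a1 a2 x \/ I3 a1 a2 x.

(* T restricted to J is the isometry x |-> s*x + c (mod 1); s = 1 orientation
   preserving (rotation), s = -1 orientation reversing (reflection). *)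
Definition piece_iso (T : R -> R) (J : R -> Prop) (s : R) : Prop :=
  exists c : R, forall x, J x -> T x = md1 (s * x + c).

Definition isometry_on (T : R -> R) (J : R -> Prop) : Prop :=
  piece_iso T J 1 \/ piece_iso T J (-1).

Definition is_flip (T : R -> R) (J : R -> Prop) : Prop := piece_iso T J (-1).

Definition extends_cont_at (T : R -> R) (D : R -> Prop) (p : R) : Prop :=
  exists v, 0 <= v < 1 /\
    forall eps, 0 < eps -> exists delta, 0 < delta /\
      forall x, D x -> cdist x p < delta -> cdist (T x) v < eps.

Definition CET3 (T : R -> R) (a1 a2 : R) : Prop :=
  0 < a1 < a2 /\ a2 < 1 /\
  (forall x y, Dom a1 a2 x -> Dom a1 a2 y -> T x = T y -> x = y) /\
  isometry_on T (I1 a1 a2) /\ isometry_on T (I2 a1 a2) /\ isometry_on T (I3 a1 a2) /\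
  (* cannot be continuously extended to a larger open set *)
  ~ extends_cont_at T (Dom a1 a2) 0 /\
  ~ extends_cont_at T (Dom a1 a2) a1 /\
  ~ extends_cont_at T (Dom a1 a2) a2.

Definition inDomIter (T : R -> R) (a1 a2 : R) (n : nat) (x : R) : Prop :=
  forall k, (k < n)%nat -> Dom a1 a2 (Nat.iter k T x).

Definition imgIter (T : R -> R) (a1 a2 : R) (n : nat) (J : R -> Prop) (y : R) : Prop :=
  exists x, J x /\ inDomIter T a1 a2 n x /\ y = Nat.iter n T x.

Definition periodic_point (T : R -> R) (a1 a2 : R) (p : R) : Prop :=
  exists m, (1 <= m)%nat /\ inDomIter T a1 a2 m p /\ Nat.iter m T p = p.

Definition cyc_sets (J1 J2 J3 : R -> Prop) : Prop :=
  forall x1 x2 x3, J1 x1 -> J2 x2 -> J3 x3 -> cyc x1 x2 x3.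

Definition disjoint (A B : R -> Prop) : Prop := forall x, A x -> B x -> False.

(* Main.v *)
Require Import Defs.
From Stdlib Require Import Reals Lra Lia List Classical ZArith.
Open Scope R_scope.

Lemma md1_bounds x : 0 <= md1 x < 1.
Proof. unfold md1. destruct (base_fp x). lra. Qed.

Lemma md1_eq x : md1 x = x - IZR (Int_part x).
Proof. reflexivity. Qed.

Lemma md1_int k y : 0 <= y < 1 -> md1 (IZR k + y) = y.
Proof.
  intros H. unfold md1, frac_part, Int_part.
  rewrite <- (tech_up (IZR k + y) (k+1)).
  - replace (k + 1 - 1)%Z with k by ring. lra.
  - rewrite plus_IZR; simpl; lra.
  - rewrite plus_IZR; simpl; lra.
Qed.

Definition itv := (R*R)%type.
Definition mem (J:itv) y := fst J < y < snd J.
Definition len (J:itv) := Rmax 0 (snd J - fst J).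
Definition disjI (J K : itv) := forall y, mem J y -> mem K y -> False.
Fixpoint pd (L : list itv) : Prop :=
  match L with nil => True | J :: L' => Forall (disjI J) L' /\ pd L' end.
Definition inb (J:itv) := 0 <= fst J /\ snd J <= 1.
Fixpoint sumlen (L : list itv) : R :=
  match L with nil => 0 | J :: L' => len J + sumlen L' end.

Lemma sumlen_app A B : sumlen (A++B) = sumlen A + sumlen B.
Proof. induction A; simpl; lra. Qed.

Lemma pd_app A B : pd A -> pd B -> (forall J K, In J A -> In K B -> disjI J K) -> pd (A++B).
Proof.
  induction A as [|J A IH]; simpl; intros HA HB Hx; auto.
  destruct HA as [HJ HA]. split.
  - apply Forall_app. split; auto. apply Forall_forall. intros K HK. apply Hx; auto.
  - apply IH; auto.
Qed.

Lemma pd_flat_map (g : itv -> list itv) L :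
  (forall J, In J L -> pd (g J)) ->
  (forall J K, disjI J K -> forall A B, In A (g J) -> In B (g K) -> disjI A B) ->
  pd L -> pd (flat_map g L).
Proof.
  induction L as [|J L IH]; simpl; intros H1 H2 H3; auto.
  destruct H3 as [HJ HL]. apply pd_app; auto.
  intros A B HA HB. apply in_flat_map in HB. destruct HB as [K [HK HB]].
  rewrite Forall_forall in HJ. eapply H2; eauto.
Qed.

Lemma filter_len_le {X} (f : X -> bool) l : (length (filter f l) <= length l)%nat.
Proof. induction l; simpl; [lia|]. destruct (f a); simpl; lia. Qed.

Lemma pd_filter f L : pd L -> pd (filter f L).
Proof.
  induction L as [|J L IH]; simpl; auto. intros [HJ HL].
  destruct (f J); simpl; auto. split; auto.
  rewrite Forall_forall in *. intros x Hx. apply filter_In in Hx. apply HJ; tauto.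
Qed.

Lemma disj_order J K : fst J < snd J -> fst K < snd K -> disjI J K ->
  snd K <= fst J \/ snd J <= fst K.
Proof.
  intros H1 H2 H3.
  destruct (Rle_dec (snd K) (fst J)) as [|n1]; [left; auto|].
  destruct (Rle_dec (snd J) (fst K)) as [|n2]; [right; auto|].
  apply Rnot_le_lt in n1. apply Rnot_le_lt in n2. exfalso.
  apply (H3 ((Rmax (fst J) (fst K) + Rmin (snd J) (snd K))/2)); unfold mem;
  unfold Rmax, Rmin; repeat destruct Rle_dec; lra.
Qed.

Lemma len_nonneg J : 0 <= len J.
Proof. unfold len, Rmax. destruct Rle_dec; lra. Qed.

Lemma pack_aux : forall n (L : list itv) A B, (length L <= n)%nat -> A <= B ->
  Forall (fun J => len J = 0 \/ (A <= fst J /\ snd J <= B)) L -> pd L ->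
  sumlen L <= B - A.
Proof.
  induction n; intros L A B Hl HAB HF Hpd.
  - destruct L; simpl in *; [lra | lia].
  - destruct L as [|J L]; simpl; [lra|]. simpl in Hl, Hpd. destruct Hpd as [HJ Hpd].
    inversion HF as [|? ? HJF HLF]; subst.
    set (f := fun K : itv => if Rle_dec (snd K) (fst J) then true else false).
    assert (Hsplit: sumlen L = sumlen (filter f L) + sumlen (filter (fun K => negb (f K)) L)).
    { clear. induction L; simpl; [lra|]. destruct (f a); simpl; lra. }
    assert (Hdeg: len J = 0 -> len J + sumlen L <= B - A).
    { intros H0. rewrite H0. specialize (IHn L A B ltac:(lia) HAB HLF Hpd). lra. }
    destruct HJF as [H0 | [HA HB]]; [auto|].
    destruct (Rle_dec (snd J) (fst J)) as [Hd|Hnd].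
    { apply Hdeg. unfold len, Rmax. destruct Rle_dec; lra. }
    apply Rnot_le_lt in Hnd.
    assert (E1: sumlen (filter f L) <= fst J - A).
    { apply IHn.
      - pose proof (filter_len_le f L). lia.
      - lra.
      - rewrite Forall_forall in *. intros K HK. apply filter_In in HK. destruct HK as [HK HfK].
        destruct (HLF K HK) as [|[HK1 HK2]]; [left; auto|]. right. unfold f in HfK.
        destruct Rle_dec; [lra|discriminate].
      - apply pd_filter; auto. }
    assert (E2: sumlen (filter (fun K => negb (f K)) L) <= B - snd J).
    { apply IHn.
      - pose proof (filter_len_le (fun K => negb (f K)) L). lia.
      - lra.
      - rewrite Forall_forall in *. intros K HK. apply filter_In in HK. destruct HK as [HK HfK].
        destruct (HLF K HK) as [|[HK1 HK2]]; [left; auto|].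
        destruct (Rle_dec (snd K) (fst K)) as [Hkd|Hknd].
        + left. unfold len, Rmax. destruct Rle_dec; lra.
        + apply Rnot_le_lt in Hknd. unfold f in HfK. destruct Rle_dec as [|Hn]; [discriminate|].
          apply Rnot_le_lt in Hn.
          destruct (disj_order J K Hnd Hknd (HJ K HK)); [lra|]. right; lra.
      - apply pd_filter; auto. }
    assert (len J = snd J - fst J) by (unfold len, Rmax; destruct Rle_dec; lra).
    lra.
Qed.

Lemma pack L : Forall inb L -> pd L -> sumlen L <= 1.
Proof.
  intros HF Hpd. replace 1 with (1 - 0) by lra. apply (pack_aux (length L)); auto; try lra.
  rewrite Forall_forall in *. intros J HJ. right. apply HF; auto.
Qed.

Definition imgs (s c : R) (P : itv) : list itv :=
  let p := fst P in let q := snd P in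
  let p' := md1 (Rmin (s*p) (s*q) + c) in let l := Rmax 0 (q - p) in
  (p', Rmin 1 (p'+l)) :: (0, p'+l-1) :: nil.

Definition covered (T : R -> R) (D : R -> Prop) (A P : itv) :=
  forall y, mem A y -> exists x, mem P x /\ D x /\ T x = y.

Lemma imgs_cov (T : R -> R) (D : R -> Prop) s c lo hi P :
  (s = 1 \/ s = -1) -> 0 <= lo -> hi <= 1 ->
  (forall x, lo < x < hi -> D x /\ T x = md1 (s*x + c)) ->
  lo <= fst P -> snd P <= hi ->
  forall A, In A (imgs s c P) -> covered T D A P.
Proof.
  intros Hs Hlo Hhi HT H1 H2 A HA y Hy. destruct P as [p q]; simpl in *.
  unfold mem in *.
  pose proof (md1_bounds (Rmin (s * p) (s * q) + c)) as Hb.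
  set (p' := md1 (Rmin (s * p) (s * q) + c)) in *.
  assert (Hp': p' = Rmin (s * p) (s * q) + c - IZR (Int_part (Rmin (s * p) (s * q) + c))) by reflexivity.
  set (k := Int_part (Rmin (s * p) (s * q) + c)) in *.
  destruct HA as [HA|[HA|[]]]; subst A; simpl in Hy.
  - assert (Hl: Rmax 0 (q - p) = q - p /\ p < q /\ y < 1 /\ y < p' + (q - p)).
    { unfold Rmax, Rmin in Hy |- *. repeat destruct Rle_dec; lra. }
    destruct Hl as [Hl [Hpq [Hy1 Hy2]]]. rewrite Hl in *.
    destruct Hs; subst s.
    + rewrite Rmin_left in Hp' by lra.
      exists (p + (y - p')). split; [simpl; lra|]. destruct (HT (p + (y - p'))) as [HD HT']; [lra|].
      split; auto. rewrite HT'. replace (1 * (p + (y - p')) + c) with (IZR k + y) by lra.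
      apply md1_int; lra.
    + rewrite Rmin_right in Hp' by lra.
      exists (q - (y - p')). split; [simpl; lra|]. destruct (HT (q - (y - p'))) as [HD HT']; [lra|].
      split; auto. rewrite HT'. replace (-1 * (q - (y - p')) + c) with (IZR k + y) by lra.
      apply md1_int; lra.
  - assert (Hl: Rmax 0 (q - p) = q - p /\ p < q).
    { unfold Rmax in *. repeat destruct Rle_dec; lra. }
    destruct Hl as [Hl Hpq]. rewrite Hl in *.
    destruct Hs; subst s.
    + rewrite Rmin_left in Hp' by lra.
      exists (p + (y + 1 - p')). split; [simpl; lra|]. destruct (HT (p + (y + 1 - p'))) as [HD HT']; [lra|].
      split; auto. rewrite HT'. replace (1 * (p + (y + 1 - p')) + c) with (IZR (k+1) + y)
        by (rewrite plus_IZR; simpl; lra).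
      apply md1_int; lra.
    + rewrite Rmin_right in Hp' by lra.
      exists (q - (y + 1 - p')). split; [simpl; lra|]. destruct (HT (q - (y + 1 - p'))) as [HD HT']; [lra|].
      split; auto. rewrite HT'. replace (-1 * (q - (y + 1 - p')) + c) with (IZR (k+1) + y)
        by (rewrite plus_IZR; simpl; lra).
      apply md1_int; lra.
Qed.

Lemma imgs_props s c lo hi P : 0 <= lo -> hi <= 1 -> lo <= fst P -> snd P <= hi ->
  Forall inb (imgs s c P) /\ pd (imgs s c P) /\ sumlen (imgs s c P) = len P.
Proof.
  intros Hlo Hhi H1 H2. destruct P as [p q]; simpl in *.
  unfold imgs, len, inb, pd, disjI, mem; simpl.
  pose proof (md1_bounds (Rmin (s * p) (s * q) + c)) as Hb.
  set (p' := md1 (Rmin (s * p) (s * q) + c)) in *. clearbody p'.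
  split; [|split].
  - apply Forall_forall; intros J HJ; simpl in HJ; destruct HJ as [<-|[<-|[]]]; simpl; unfold Rmax, Rmin; repeat destruct Rle_dec; lra.
  - split; [|split; [constructor|exact I]]. constructor; [|constructor]. intros y; simpl. unfold Rmax, Rmin; repeat destruct Rle_dec; lra.
  - unfold Rmax, Rmin; repeat destruct Rle_dec; lra.
Qed.

Lemma cov_disj (T : R -> R) (D : R -> Prop) A B P Q :
  (forall x y, D x -> D y -> T x = T y -> x = y) ->
  covered T D A P -> covered T D B Q -> disjI P Q -> disjI A B.
Proof.
  intros Hinj HA HB HPQ y Ha Hb.
  destruct (HA y Ha) as [x [Hx [Dx Tx]]]. destruct (HB y Hb) as [x' [Hx' [Dx' Tx']]].
  assert (x = x') by (apply Hinj; congruence). subst. eauto.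
Qed.

Definition gstep (a1 a2 s1 c1 s2 c2 s3 c3 : R) (J : itv) : list itv :=
  imgs s1 c1 (Rmax (fst J) 0, Rmin (snd J) a1) ++
  imgs s2 c2 (Rmax (fst J) a1, Rmin (snd J) a2) ++
  imgs s3 c3 (Rmax (fst J) a2, Rmin (snd J) 1).

Definition Hyp (T : R -> R) (a1 a2 s1 c1 s2 c2 s3 c3 : R) : Prop :=
  0 < a1 < a2 /\ a2 < 1 /\
  (forall x y, Dom a1 a2 x -> Dom a1 a2 y -> T x = T y -> x = y) /\
  (s1 = 1 \/ s1 = -1) /\ (forall x, I1 a1 a2 x -> T x = md1 (s1 * x + c1)) /\
  (s2 = 1 \/ s2 = -1) /\ (forall x, I2 a1 a2 x -> T x = md1 (s2 * x + c2)) /\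
  (s3 = 1 \/ s3 = -1) /\ (forall x, I3 a1 a2 x -> T x = md1 (s3 * x + c3)).

Lemma gstep_cov T a1 a2 s1 c1 s2 c2 s3 c3 J :
  Hyp T a1 a2 s1 c1 s2 c2 s3 c3 ->
  forall A, In A (gstep a1 a2 s1 c1 s2 c2 s3 c3 J) ->
  exists P, covered T (Dom a1 a2) A P /\ (forall x, mem P x -> mem J x).
Proof.
  intros (Ha & Ha2 & Hinj & Hs1 & HT1 & Hs2 & HT2 & Hs3 & HT3) A HA.
  unfold gstep in HA. apply in_app_or in HA. destruct HA as [HA|HA];
    [|apply in_app_or in HA; destruct HA as [HA|HA]].
  - eexists; split. eapply (imgs_cov T (Dom a1 a2) s1 c1 0 a1); eauto; simpl; try lra.
    + intros x Hx. split; [left; unfold I1; lra|]. apply HT1. unfold I1; lra.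
    + apply Rmax_r.
    + apply Rmin_r.
    + intros x; unfold mem; simpl. pose proof (Rmax_l (fst J) 0). pose proof (Rmin_l (snd J) a1). lra.
  - eexists; split. eapply (imgs_cov T (Dom a1 a2) s2 c2 a1 a2); eauto; simpl; try lra.
    + intros x Hx. split; [right; left; unfold I2; lra|]. apply HT2. unfold I2; lra.
    + apply Rmax_r.
    + apply Rmin_r.
    + intros x; unfold mem; simpl. pose proof (Rmax_l (fst J) a1). pose proof (Rmin_l (snd J) a2). lra.
  - eexists; split. eapply (imgs_cov T (Dom a1 a2) s3 c3 a2 1); eauto; simpl; try lra.
    + intros x Hx. split; [right; right; unfold I3; lra|]. apply HT3. unfold I3; lra.
    + apply Rmax_r.
    + apply Rmin_r.
    + intros x; unfold mem; simpl. pose proof (Rmax_l (fst J) a2). pose proof (Rmin_l (snd J) 1). lra.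
Qed.

Lemma gstep_props T a1 a2 s1 c1 s2 c2 s3 c3 J :
  Hyp T a1 a2 s1 c1 s2 c2 s3 c3 -> inb J ->
  Forall inb (gstep a1 a2 s1 c1 s2 c2 s3 c3 J) /\ pd (gstep a1 a2 s1 c1 s2 c2 s3 c3 J) /\
  sumlen (gstep a1 a2 s1 c1 s2 c2 s3 c3 J) = len J.
Proof.
  intros H HJ. pose proof H as (Ha & Ha2 & Hinj & Hs1 & HT1 & Hs2 & HT2 & Hs3 & HT3).
  destruct J as [l r]. unfold inb in HJ; simpl in HJ.
  pose proof (Rmax_r l 0). pose proof (Rmin_r r a1).
  pose proof (Rmax_r l a1). pose proof (Rmin_r r a2).
  pose proof (Rmax_r l a2). pose proof (Rmin_r r 1).
  destruct (imgs_props s1 c1 0 a1 (Rmax l 0, Rmin r a1)) as (F1 & P1 & S1); simpl; try lra.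
  destruct (imgs_props s2 c2 a1 a2 (Rmax l a1, Rmin r a2)) as (F2 & P2 & S2); simpl; try lra.
  destruct (imgs_props s3 c3 a2 1 (Rmax l a2, Rmin r 1)) as (F3 & P3 & S3); simpl; try lra.
  assert (C: forall lo1 hi1 lo2 hi2 s c s' c' P Q, 0 <= lo1 -> hi1 <= 1 -> 0 <= lo2 -> hi2 <= 1 ->
    lo1 <= fst P -> snd P <= hi1 -> lo2 <= fst Q -> snd Q <= hi2 -> hi1 <= lo2 ->
    (s = 1 \/ s = -1) -> (s' = 1 \/ s' = -1) ->
    (forall x, lo1 < x < hi1 -> Dom a1 a2 x /\ T x = md1 (s*x + c)) ->
    (forall x, lo2 < x < hi2 -> Dom a1 a2 x /\ T x = md1 (s'*x + c')) ->
    forall A B, In A (imgs s c P) -> In B (imgs s' c' Q) -> disjI A B).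
  { intros lo1 hi1 lo2 hi2 s c s' c' P Q h1 h2 h3 h4 h5 h6 h7 h8 h9 h10 h11 h12 h13 A B HA HB.
    apply (cov_disj T (Dom a1 a2) A B P Q); [exact Hinj| | |].
    - apply (imgs_cov T (Dom a1 a2) s c lo1 hi1 P); auto.
    - apply (imgs_cov T (Dom a1 a2) s' c' lo2 hi2 Q); auto.
    - intros y; unfold mem; lra. }
  assert (R1: forall x, 0 < x < a1 -> Dom a1 a2 x /\ T x = md1 (s1*x + c1)).
  { intros x Hx. split; [left; unfold I1; lra|]. apply HT1. unfold I1; lra. }
  assert (R2: forall x, a1 < x < a2 -> Dom a1 a2 x /\ T x = md1 (s2*x + c2)).
  { intros x Hx. split; [right; left; unfold I2; lra|]. apply HT2. unfold I2; lra. }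
  assert (R3: forall x, a2 < x < 1 -> Dom a1 a2 x /\ T x = md1 (s3*x + c3)).
  { intros x Hx. split; [right; right; unfold I3; lra|]. apply HT3. unfold I3; lra. }
  unfold gstep; change (fst (l, r)) with l; change (snd (l, r)) with r.
  assert (G3: sumlen (imgs s1 c1 (Rmax l 0, Rmin r a1) ++ imgs s2 c2 (Rmax l a1, Rmin r a2) ++ imgs s3 c3 (Rmax l a2, Rmin r 1)) = len (l, r)).
  { rewrite !sumlen_app, S1, S2, S3. unfold len; simpl.
    unfold Rmax, Rmin; repeat destruct Rle_dec; lra. }
  assert (G1: Forall inb (imgs s1 c1 (Rmax l 0, Rmin r a1) ++ imgs s2 c2 (Rmax l a1, Rmin r a2) ++ imgs s3 c3 (Rmax l a2, Rmin r 1))).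
  { repeat (apply Forall_app; split); auto. }
  refine (conj G1 (conj _ G3)).
  - apply (pd_app (imgs s1 c1 (Rmax l 0, Rmin r a1)) (imgs s2 c2 (Rmax l a1, Rmin r a2) ++ imgs s3 c3 (Rmax l a2, Rmin r 1))); [auto| apply (pd_app (imgs s2 c2 (Rmax l a1, Rmin r a2)) (imgs s3 c3 (Rmax l a2, Rmin r 1))); auto |].
    + intros A B HA HB. apply (C a1 a2 a2 1 s2 c2 s3 c3 (Rmax l a1, Rmin r a2) (Rmax l a2, Rmin r 1)); simpl; try lra; auto.
    + intros A B HA HB. apply in_app_or in HB. destruct HB as [HB|HB].
      * apply (C 0 a1 a1 a2 s1 c1 s2 c2 (Rmax l 0, Rmin r a1) (Rmax l a1, Rmin r a2)); simpl; try lra; auto.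
      * apply (C 0 a1 a2 1 s1 c1 s3 c3 (Rmax l 0, Rmin r a1) (Rmax l a2, Rmin r 1)); simpl; try lra; auto.
Qed.

Fixpoint Ls (g : itv -> list itv) (a1 : R) (n : nat) : list itv :=
  match n with O => (0, a1) :: nil | S n => flat_map g (Ls g a1 n) end.

Fixpoint Cat (g : itv -> list itv) (a1 : R) (M : nat) : list itv :=
  match M with O => Ls g a1 O | S M => Ls g a1 (S M) ++ Cat g a1 M end.

Lemma sumlen_flat_map (g : itv -> list itv) L :
  (forall J, In J L -> sumlen (g J) = len J) -> sumlen (flat_map g L) = sumlen L.
Proof.
  induction L as [|J L IH]; simpl; intros H; auto.
  rewrite sumlen_app, H by auto. rewrite IH; auto.
Qed.

Lemma Ls_inv T a1 a2 s1 c1 s2 c2 s3 c3 :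
  Hyp T a1 a2 s1 c1 s2 c2 s3 c3 -> forall n,
  let L := Ls (gstep a1 a2 s1 c1 s2 c2 s3 c3) a1 n in
  Forall inb L /\ pd L /\ sumlen L = a1 /\
  (forall J, In J L -> forall y, mem J y -> imgIter T a1 a2 n (I1 a1 a2) y).
Proof.
  intros H. pose proof H as (Ha & Ha2 & Hinj & _).
  induction n as [|n IH]; simpl.
  - split; [|split; [|split]].
    + constructor; [unfold inb; simpl; lra|constructor].
    + split; [constructor|exact I].
    + unfold len, Rmax; simpl. destruct Rle_dec; lra.
    + intros J [<-|[]] y Hy. exists y. unfold mem in Hy; simpl in Hy.
      split; [unfold I1; lra|]. split; [intros k Hk; lia|reflexivity].
  - destruct IH as (F & P & S & M). split; [|split; [|split]].
    + apply Forall_forall. intros A HA. apply in_flat_map in HA. destruct HA as [J [HJ HA]].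
      rewrite Forall_forall in F. destruct (gstep_props T a1 a2 s1 c1 s2 c2 s3 c3 J H (F J HJ)) as (F' & _).
      rewrite Forall_forall in F'. auto.
    + apply pd_flat_map; auto.
      * intros J HJ. rewrite Forall_forall in F. apply (gstep_props T a1 a2 s1 c1 s2 c2 s3 c3 J H (F J HJ)).
      * intros J K HJK A B HA HB.
        destruct (gstep_cov T a1 a2 s1 c1 s2 c2 s3 c3 J H A HA) as [P1 [C1 S1]].
        destruct (gstep_cov T a1 a2 s1 c1 s2 c2 s3 c3 K H B HB) as [P2 [C2 S2]].
        apply (cov_disj T (Dom a1 a2) A B P1 P2 Hinj C1 C2).
        intros y Hy1 Hy2. apply (HJK y); auto.
    + rewrite sumlen_flat_map; auto. intros J HJ. rewrite Forall_forall in F.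
      apply (gstep_props T a1 a2 s1 c1 s2 c2 s3 c3 J H (F J HJ)).
    + intros A HA y Hy. apply in_flat_map in HA. destruct HA as [J [HJ HA]].
      destruct (gstep_cov T a1 a2 s1 c1 s2 c2 s3 c3 J H A HA) as [P1 [C1 S1]].
      destruct (C1 y Hy) as [x [Hx [Dx Tx]]].
      destruct (M J HJ x (S1 x Hx)) as [x0 [H0 [Hd0 E0]]].
      exists x0. split; auto. split.
      * intros k Hk. destruct (Nat.eq_dec k n) as [->|Hne]; [rewrite <- E0; auto|]. apply Hd0; lia.
      * simpl. rewrite <- E0. auto.
Qed.

Lemma In_Cat g a1 M J : In J (Cat g a1 M) -> exists k, (k <= M)%nat /\ In J (Ls g a1 k).
Proof.
  induction M as [|M IH]; simpl; intros H.
  - exists O; split; auto.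
  - apply in_app_or in H. destruct H as [H|H].
    + exists (S M); split; auto.
    + destruct (IH H) as [k [Hk Hk']]. exists k; split; auto.
Qed.

Lemma Cat_props T a1 a2 s1 c1 s2 c2 s3 c3 :
  Hyp T a1 a2 s1 c1 s2 c2 s3 c3 ->
  (forall m n, (m < n)%nat -> disjoint (imgIter T a1 a2 m (I1 a1 a2)) (imgIter T a1 a2 n (I1 a1 a2))) ->
  forall M, let L := Cat (gstep a1 a2 s1 c1 s2 c2 s3 c3) a1 M in
  Forall inb L /\ pd L /\ sumlen L = INR (S M) * a1.
Proof.
  intros H Hdis. induction M as [|M IH].
  - simpl. destruct (Ls_inv T a1 a2 s1 c1 s2 c2 s3 c3 H O) as (F & P & Sm & _). simpl in *.
    split; auto. split; auto. lra.
  - cbv zeta in *. change (Cat ?g ?a (S ?M)) with (Ls g a (S M) ++ Cat g a M).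
    destruct IH as (F & P & Sm).
    destruct (Ls_inv T a1 a2 s1 c1 s2 c2 s3 c3 H (S M)) as (F' & P' & S' & M').
    split; [|split].
    + apply Forall_app; split; auto.
    + apply pd_app; auto. intros J K HJ HK y Hy1 Hy2.
      destruct (In_Cat _ _ _ _ HK) as [k [Hk HK']].
      destruct (Ls_inv T a1 a2 s1 c1 s2 c2 s3 c3 H k) as (_ & _ & _ & Mk).
      apply (Hdis k (S M) ltac:(lia) y); [apply (Mk K HK' y Hy2) | apply (M' J HJ y Hy1)].
    + rewrite sumlen_app, S', Sm. destruct M; simpl; lra.
Qed.

Lemma iter_add (f : R -> R) a b x : Nat.iter (a + b) f x = Nat.iter a f (Nat.iter b f x).
Proof. induction a; simpl; [reflexivity|]. rewrite IHa; reflexivity. Qed.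

Lemma iter_inj T a1 a2 :
  (forall x y, Dom a1 a2 x -> Dom a1 a2 y -> T x = T y -> x = y) ->
  forall m x y, inDomIter T a1 a2 m x -> inDomIter T a1 a2 m y ->
  Nat.iter m T x = Nat.iter m T y -> x = y.
Proof.
  intros Hinj. induction m; simpl; intros x y Hx Hy E; [exact E|].
  apply IHm; [intros k Hk; apply Hx; lia|intros k Hk; apply Hy; lia|].
  apply Hinj; [apply Hx; lia|apply Hy; lia|exact E].
Qed.

Lemma img_disj T a1 a2 m n :
  (forall x y, Dom a1 a2 x -> Dom a1 a2 y -> T x = T y -> x = y) ->
  (m < n)%nat -> disjoint (imgIter T a1 a2 (n - m) (I1 a1 a2)) (I1 a1 a2) ->
  disjoint (imgIter T a1 a2 m (I1 a1 a2)) (imgIter T a1 a2 n (I1 a1 a2)).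
Proof.
  intros Hinj Hmn Hd y [x [Hx [Hdx Ey]]] [z [Hz [Hdz Ez]]].
  assert (En: n = (m + (n - m))%nat) by lia.
  rewrite En, iter_add in Ez.
  assert (Hz' : inDomIter T a1 a2 m (Nat.iter (n - m) T z)).
  { intros k Hk. rewrite <- iter_add. apply Hdz. lia. }
  assert (E : Nat.iter (n - m) T z = x).
  { apply (iter_inj T a1 a2 Hinj m); auto. congruence. }
  apply (Hd x); auto. exists z. split; auto. split; auto.
  intros k Hk. apply Hdz. lia.
Qed.

Lemma exists_min (P : nat -> Prop) : (exists n, P n) ->
  exists n, P n /\ forall m, (m < n)%nat -> ~ P m.
Proof.
  intros [n Hn]. revert Hn. induction n as [n IH] using (well_founded_induction Wf_nat.lt_wf).
  intros Hn. destruct (classic (exists m, (m < n)%nat /\ P m)) as [[m [Hm Pm]]|Hno].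
  - apply (IH m Hm Pm).
  - exists n. split; auto. intros m Hm Pm. apply Hno. eauto.
Qed.

Lemma iso_get T J : isometry_on T J ->
  exists s c, (s = 1 \/ s = -1) /\ forall x, J x -> T x = md1 (s * x + c).
Proof. intros [[c H]|[c H]]; eauto. Qed.

Theorem lemma3p3 (T : R -> R) (a1 a2 : R) :
  CET3 T a1 a2 ->
  is_flip T (I1 a1 a2) -> ~ is_flip T (I2 a1 a2) -> ~ is_flip T (I3 a1 a2) ->
  cyc_sets (imgIter T a1 a2 1 (I1 a1 a2)) (imgIter T a1 a2 1 (I3 a1 a2))
           (imgIter T a1 a2 1 (I2 a1 a2)) ->
  (forall p, ~ periodic_point T a1 a2 p) ->
  exists N : nat, (2 <= N)%nat /\
    (forall n, (1 <= n <= N - 1)%nat ->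
       disjoint (imgIter T a1 a2 n (I1 a1 a2)) (I1 a1 a2)) /\
    ~ disjoint (imgIter T a1 a2 N (I1 a1 a2)) (I1 a1 a2) /\
    (forall m n, (m < n)%nat -> (n <= N - 1)%nat ->
       disjoint (imgIter T a1 a2 m (I1 a1 a2)) (imgIter T a1 a2 n (I1 a1 a2))).
Proof.
  intros HC Hf _ _ _ Hnp.
  destruct HC as (Ha & Ha2 & Hinj & Hi1 & Hi2 & Hi3 & _).
  destruct Hf as [c1 HT1].
  destruct (iso_get _ _ Hi2) as (s2 & c2 & Hs2 & HT2).
  destruct (iso_get _ _ Hi3) as (s3 & c3 & Hs3 & HT3).
  assert (H : Hyp T a1 a2 (-1) c1 s2 c2 s3 c3).
  { unfold Hyp. repeat (split; [auto|]); auto. }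
  assert (no1 : disjoint (imgIter T a1 a2 1 (I1 a1 a2)) (I1 a1 a2)).
  { intros y [x [Hx [Hd Ey]]] Hy. simpl in Ey. rewrite HT1 in Ey by auto.
    rewrite md1_eq in Ey. set (k := Int_part (-1 * x + c1)) in *.
    set (z := (x + y) / 2).
    apply (Hnp z). exists 1%nat. unfold I1 in *.
    split; [lia|]. split.
    - intros j Hj. assert (j = O) by lia. subst j. simpl. left. unfold I1, z. lra.
    - simpl. rewrite HT1 by (unfold I1, z; lra).
      replace (-1 * z + c1) with (IZR k + z) by (unfold z; lra).
      apply md1_int. unfold z; lra. }
  assert (Hex : exists n, (1 <= n)%nat /\ ~ disjoint (imgIter T a1 a2 n (I1 a1 a2)) (I1 a1 a2)).
  { apply NNPP. intro Hno.
    assert (Hd : forall n, (1 <= n)%nat -> disjoint (imgIter T a1 a2 n (I1 a1 a2)) (I1 a1 a2)).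
    { intros n Hn. apply NNPP. intro Hn'. apply Hno. eauto. }
    assert (Hdis : forall m n, (m < n)%nat -> disjoint (imgIter T a1 a2 m (I1 a1 a2)) (imgIter T a1 a2 n (I1 a1 a2))).
    { intros m n Hmn. apply img_disj; auto. apply Hd. lia. }
    set (M := Z.to_nat (up (/ a1))).
    assert (HM : INR M > / a1).
    { unfold M. destruct (archimed (/ a1)) as [Hu _].
      assert (0 < / a1) by (apply Rinv_0_lt_compat; lra).
      rewrite INR_IZR_INZ, Z2Nat.id; auto.
      apply le_IZR. lra. }
    assert (HM2 : INR M * a1 > / a1 * a1) by (apply Rmult_gt_compat_r; lra).
    rewrite Rinv_l in HM2 by lra.
    destruct (Cat_props T a1 a2 (-1) c1 s2 c2 s3 c3 H Hdis M) as (F & P & S).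
    pose proof (pack _ F P). rewrite S, S_INR in H0. lra. }
  destruct (exists_min _ Hex) as [N [[HN1 HN2] Hmin]].
  assert (HN : (2 <= N)%nat).
  { destruct (Nat.eq_dec N 1) as [->|]; [|lia]. exfalso; apply HN2; exact no1. }
  exists N. split; [exact HN|]. split; [|split; [exact HN2|]].
  - intros n Hn. apply NNPP. intro Hn'. apply (Hmin n); [lia|]. split; [lia|exact Hn'].
  - intros m n Hmn HnN. apply img_disj; auto.
    apply NNPP. intro Hn'. apply (Hmin (n - m)%nat); [lia|]. split; [lia|exact Hn'].
Qed.
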